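(* Let $(K,\delta_K^* )$ be an iterative $q$-difference field whose field of constants is $C$. Then for any elements $x_1,\dots,x_r\in K$ which are linearly independent over $C$, the iterative Taylor series $\mathbf T_{x_1},\dots,\mathbf T_{x_r}$ are linearly independent over $K$; that is, if $a_1,\dots,a_r\in K$ satisfy $\sum_{j=1}^ra_j\delta_K^{(k)}(x_j)=0$ for all $k\in\mathbb N$, then $a_1=\dots=a_r=0$.
   Context: Let $C$ be an algebraically closed field and $q\in C$ with $q\ne1$ (possibly a root of unity). Let $F=C(t)$ with the automorphism $\sigma_q(f(t))=f(qt)$. For $r,k\in\mathbb N$, $\binom{r}{k}_q$ is the value at $q$ of the Gaussian polynomial $\prod_{i=1}^{k}\frac{1-x^{r-i+1}}{1-x^{i}}\in\mathbb Z[x]$. An iterative $q$-difference field is a field $K\supseteq F$ with an automorphism $\sigma_q$ extending that of $F$ and maps $\delta_K^{(k)}:K\to K$ ($k\in\mathbb N$) such that for all $a,b\in K$, $i,j,k$: $\delta_K^{(0)}=\mathrm{id}$; $\delta_K^{(1)}=\frac{\sigma_q-\mathrm{id}}{(q-1)t}$; $\delta_K^{(k)}$ additive; $\delta_K^{(k)}(ab)=\sum_{i+j=k}\sigma_q^i(\delta_K^{(j)}(a))\delta_K^{(i)}(b)$; $\delta_K^{(i)}\circ\delta_K^{(j)}=\binom{i+j}{i}_q\delta_K^{(i+j)}$. Its field of constants is $\{c\in K:\delta_K^{(k)}(c)=0\ \forall k\ge1\}$. The iterative Taylor series of $a\in K$ is $\mathbf T_a=\sum_{k\in\mathbb N}\delta_K^{(k)}(a)T^k\in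 K[[T]]$. *)

(* Defs.v *)
From HB Require Import structures.
From mathcomp Require Import all_boot all_order all_algebra.
Set Implicit Arguments. Unset Strict Implicit. Unset Printing Implicit Defensive.
Import GRing.Theory.
Local Open Scope ring_scope.

(* Gaussian polynomial [r choose k]_x in Z[x], defined by the q-Pascal
   recursion [r+1, k+1] = [r, k] + x^(k+1) [r, k+1], [r, 0] = 1,
   [0, k+1] = 0; this is the polynomial prod_{i=1}^k (1-x^(r-i+1))/(1-x^i). *)
Fixpoint gauss_poly (r k : nat) {struct r} : {poly int} :=
  match r, k with
  | _, 0%N => 1
  | 0%N, _.+1 => 0
  | r'.+1, k'.+1 => gauss_poly r' k' + 'X^(k'.+1) * gauss_poly r' k
  end.

Definition qbinom (C : comNzRingType) (q : C) (r k : nat) : C :=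
  (map_poly intr (gauss_poly r k)).[q].

(* K is an iterative q-difference field over F = C(t):
   iota : C -> K and t : K transcendental over iota(C) give the embedding
   F = C(t) ⊆ K; sigma is an automorphism of K extending sigma_q
   (sigma fixes C and sends t to q t); delta k = δ_K^(k). *)
Record is_iter_qdiff_field (C : closedFieldType) (q : C) (K : fieldType)
    (iota : {rmorphism C -> K}) (t : K) (sigma : {rmorphism K -> K})
    (delta : nat -> K -> K) : Prop := {
  iqd_transc : forall p : {poly C}, p != 0 -> (map_poly iota p).[t] != 0;
  iqd_sigma_bij : bijective sigma;
  iqd_sigma_C : forall c : C, sigma (iota c) = iota c;
  iqd_sigma_t : sigma t = iota q * t;
  iqd_delta0 : forall a, delta 0%N a = a;
  iqd_delta1 : forall a, delta 1%N a = (sigma a - a) / ((iota q - 1) * t);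
  iqd_additive : forall k a b, delta k (a + b) = delta k a + delta k b;
  iqd_leibniz : forall k a b,
      delta k (a * b) = \sum_(i < k.+1) iter i sigma (delta (k - i)%N a) * delta i b;
  iqd_iter : forall i j a,
      delta i (delta j a) = iota (qbinom q (i + j) i) * delta (i + j)%N a
}.

Definition iqd_constant (K : fieldType) (delta : nat -> K -> K) (c : K) : Prop :=
  forall k : nat, (0 < k)%N -> delta k c = 0.

(* Main.v *)
Require Import Defs.
From HB Require Import structures.
From mathcomp Require Import all_boot all_order all_algebra.
Import GRing.Theory.
Local Open Scope ring_scope.

Theorem theorem2p22 (C : closedFieldType) (q : C) (hq : q != 1)
    (K : fieldType) (iota : {rmorphism C -> K}) (t : K)
    (sigma : {rmorphism K -> K}) (delta : nat -> K -> K)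
    (hK : is_iter_qdiff_field q iota t sigma delta)
    (hconst : forall c : K, iqd_constant delta c <-> exists c0 : C, c = iota c0)
    (r : nat) (x : 'I_r -> K)
    (hx : forall c : 'I_r -> C, \sum_(j < r) iota (c j) * x j = 0 -> forall j, c j = 0)
    (a : 'I_r -> K)
    (ha : forall k : nat, \sum_(j < r) a j * delta k (x j) = 0) :
  forall j, a j = 0.
Proof.
case: hK => _ sbij sC st d0 d1 dadd dleib diter.
have dzero : forall k, delta k 0 = 0.
  move=> k; have h := dadd k 0 0; rewrite addr0 in h.
  by apply: (addrI (delta k 0)); rewrite addr0 -h.
have dsum : forall k (f : 'I_r -> K), delta k (\sum_j f j) = \sum_j delta k (f j).
  by move=> k f; apply: (big_morph _ (dadd k) (dzero k)).
have d1one : forall k, (0 < k)%N -> delta k 1 = 0.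
  by apply/(hconst 1); exists 1; rewrite rmorph1.
case: sbij => g sg gs.
have itg : forall n y, iter n sigma (iter n g y) = y.
  elim=> [//|n IH] y; rewrite iterSr iterS gs; exact: IH.
have g0 : g 0 = 0 by apply: (fmorph_inj sigma); rewrite gs rmorph0.
have itg0 : forall n, iter n g 0 = 0 by elim=> //= n ->.
have its0 : forall n, iter n sigma 0 = 0 by elim=> //= n ->; rewrite rmorph0.
have itinj : forall n y, iter n sigma y = 0 -> y = 0.
  by elim=> [//|n IH] y; rewrite iterSr => /IH /eqP; rewrite fmorph_eq0 => /eqP.
have itsum : forall n (f : 'I_r -> K), iter n sigma (\sum_j f j) = \sum_j iter n sigma (f j).
  elim=> [//|n IH] f /=; rewrite IH rmorph_sum; done.
have itmul : forall n y z, iter n sigma (y * z) = iter n sigma y * iter n sigma z.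
  elim=> [//|n IH] y z /=; rewrite IH rmorphM; done.
pose V (b : 'I_r -> K) := forall k, \sum_j b j * delta k (x j) = 0.
suff main : forall (n : nat) (b : 'I_r -> K), V b -> (#|[set j | b j != 0%R]| <= n)%N -> forall j, b j = 0.
  by apply: (main r) => //; rewrite (leq_trans (max_card _)) // card_ord.
elim=> [|s IHn] b Vb.
  rewrite leqn0 => /eqP/cards0_eq/setP hs j.
  by have := hs j; rewrite !inE => /negbFE/eqP.
move=> hcard.
case: (pickP [pred j | b j != 0]) => [j0 /= hj0|hnone]; last first.
  by move=> j; have := hnone j; rewrite /= => /negbFE/eqP.
exfalso.
pose a' j := b j / b j0.
have Va : V a'.
  move=> k; rewrite /a'.
  under eq_bigr => j _ do rewrite mulrAC.
  by rewrite -mulr_suml Vb mul0r.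
have a'j0 : a' j0 = 1 by rewrite /a' divff.
have suppa : forall j, a' j = 0 -> b j = 0.
  by move=> j; rewrite /a' => /eqP; rewrite mulf_eq0 invr_eq0 (negbTE hj0) orbF => /eqP.
have cst : forall N m, (0 < m <= N)%N -> forall j, delta m (a' j) = 0.
  elim=> [|N IHN] m; first by case: m => [|m] //; rewrite andbF.
  case/andP => m0; rewrite leq_eqVlt => /orP [/eqP -> | hmN]; last first.
    by apply: IHN; rewrite m0 -ltnS.
  have IH' : forall i, (0 < i < N.+1)%N -> forall j, delta i (a' j) = 0.
    by move=> i /andP [i0 iN]; apply: IHN; rewrite i0 -ltnS.
  pose c j := iter N.+1 g (delta N.+1 (a' j)).
  have E : forall k j, delta N.+1 (delta k (x j) * a' j) =
      iota (qbinom q (N.+1 + k) N.+1) * delta (N.+1 + k) (x j) * a' j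
      + iter N.+1 sigma (delta k (x j)) * delta N.+1 (a' j).
    move=> k j; rewrite dleib big_ord_recr /= subnn d0 big_ord_recl /= subn0 d0 diter.
    rewrite big1 ?addr0 //= => i _.
    by rewrite IH' ?mulr0 //= /bump /= add1n ltnS ltn_ord.
  have Vc : V c.
    move=> k; apply: (itinj N.+1); rewrite itsum.
    under eq_bigr => j _ do rewrite itmul itg.
    have h2 := Va (N.+1 + k)%N.
    have h1 : delta N.+1 (\sum_j delta k (x j) * a' j) = 0.
      rewrite (_ : \sum_j delta k (x j) * a' j = 0) ?dzero // -[RHS](Va k).
      by apply: eq_bigr => j _; rewrite mulrC.
    rewrite dsum (eq_bigr _ (fun j _ => E k j)) big_split /= in h1.
    set cq := iota (qbinom q (N.+1 + k) N.+1).
    have hA : \sum_j cq * delta (N.+1 + k) (x j) * a' j = 0.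
      rewrite -[RHS](mulr0 cq) -[in RHS]h2 mulr_sumr.
      by apply: eq_bigr => j _; rewrite -mulrA [_ * a' j]mulrC.
    rewrite hA add0r in h1; rewrite -[RHS]h1.
    by apply: eq_bigr => j _; rewrite mulrC.
  have sub : [set j | c j != 0] \subset [set j | b j != 0] :\ j0.
    apply/subsetP => j; rewrite !inE; apply: contraR.
    case/nandP => [/negbNE/eqP ->|/negbNE/eqP bj].
      by rewrite /c a'j0 d1one // itg0.
    by rewrite /c /a' bj mul0r dzero itg0.
  have hc : (#|[set j | c j != 0%R]| <= s)%N.
    apply: (leq_trans (subset_leq_card sub)).
    move: hcard; rewrite (cardsD1 j0) inE hj0 add1n ltnS; done.
  move=> j; rewrite -(itg N.+1 (delta N.+1 (a' j))) -/(c j) (IHn c Vc hc j).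
  exact: its0.
have ex : forall j, exists c0, a' j == iota c0.
  move=> j; have hcst : iqd_constant delta (a' j) by move=> k hk; apply: (cst k); rewrite hk leqnn.
  have [c0 ->] := (hconst (a' j)).1 hcst.
  by exists c0.
pose c0 j := xchoose (ex j).
have hc : forall j, a' j = iota (c0 j) := fun j => eqP (xchooseP (ex j)).
have := hx c0 _ j0.
have := Va 0%N; under eq_bigr => j _ do rewrite d0 hc.
move=> h /(_ h) c0j0.
by move: a'j0; rewrite hc c0j0 rmorph0 => /eqP; rewrite eq_sym oner_eq0.
Qed.
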